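(* A planar structure's degrees of statical (and thus kinematical) in- or over-determinacy is invariant both under projective planar transformations and dualities.
   Context: Planar structures are considered in two settings. In the planar system, bodies in the $x,y$ plane are subjected to coplanar forces, represented as $f=(-F_y,F_x,M_z)\in\mathcal{F}_p$ (projective homogeneous coordinates of the line of action in the real projective plane $PG(2)$), and move in the plane with velocities $e=(-v_y,v_x,\omega_z)\in\mathcal{E}_c$ (homogeneous coordinates of the instantaneous centre of rotation). In the complementary planar system, bodies in the $x,y$ plane are subjected to forces orthogonal to the plane, $f=(-M_y,M_x,F_z)\in\mathcal{F}_c$ (homogeneous coordinates of the point of attack), and move with velocities $e=(-\omega_y,\omega_x,v_z)\in\mathcal{E}_p$ (homogeneous coordinates of the axis of rotation). A projective transformation (resp. duality) of a statics/kinematics problem transforms all points and lines of the structure and of the forces/velocities according to a projective transformation (resp. duality) of $PG(2)$, such that the image is in static equilibrium / compatible iff the original is. It has been established that: invertible linear maps $\mathcal{F}_p\to\mathcal{F}_p$, $\mathcal{F}_c\to\mathcal{F}_c$, $\mathcal{F}_p\leftrightarrow\mathcal{F}_c$ (forces $f_i\mapsto f_iA$) preserve static equilibrium, and invertible linear maps $\mathcal{E}_p\to\mathcal{E}_p$, $\mathcal{E}_c\to\mathcal{E}_c$, $\mathcal{E}_p\leftrightarrow\mathcal{E}_c$ preserve compatibility; every projective transformation (for maps within the same space) or duality (for maps between the $p$ and $c$ spaces) of a statics/kinematics problem is the composition of a scaling-equivalence class of such an invertible linear map with an equilibrium- (resp. compatibility-) preserving congruence (a nonzero rescaling $f_i\mapsto\psi_i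 f_i$ of the individual forces/velocities, which leaves their lines/points of attack unchanged), and every such composition gives one. Statical and kinematical degrees of indeterminacy are linked: to each kinematical degree of indeterminacy corresponds a degree of static overdeterminacy and vice versa. *)

(* Defs.v *)
From HB Require Import structures.
From mathcomp Require Import all_boot all_order all_algebra.
Set Implicit Arguments. Unset Strict Implicit. Unset Printing Implicit Defensive.
Import Order.TTheory GRing.Theory Num.Theory.
Local Open Scope ring_scope.

(* A planar structure: nb free bodies (the ground/fixed support is [None]),
   nj joints (interactions).  Joint j connects body [jtail j] and body
   [jhead j]; its (internal) force f_j, a vector of homogeneous force
   coordinates in R^3 (f in F_p or F_c), acts as +f_j on [jtail j] and as
   -f_j on [jhead j] (action = reaction).  The forces the joint can
   transmit form the linear subspace (projective subspace of PG(2)) given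
   by the row space of [jforces j] (e.g. a pencil of lines through a hinge,
   a single line of action for a bar, everything for a rigid connection). *)
Record structure (R : fieldType) (nb nj : nat) := Structure {
  jtail : 'I_nj -> option 'I_nb;
  jhead : 'I_nj -> option 'I_nb;
  jforces : 'I_nj -> 'M[R]_3 }.

Section Degrees.
Variables (R : fieldType) (nb nj : nat) (s : structure R nb nj).

Definition incidence : 'M[R]_(nb, nj) :=
  \matrix_(k, j) ((jtail s j == Some k)%:R - (jhead s j == Some k)%:R).

(* internal force states are F : 'M_(nj,3) (row j = f_j), vectorized by mxvec *)
Definition joint_space (j : 'I_nj) : 'M[R]_(3, nj * 3) :=
  jforces s j *m
    lin1_mx (fun x : 'rV[R]_3 => mxvec (delta_mx j 0 *m x : 'M[R]_(nj, 3))).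

Definition admissible : 'M[R]_(nj * 3) := (\sum_j <<joint_space j>>)%MS.

Definition equil_map : 'M[R]_(nj * 3, nb * 3) :=
  lin_mx (mulmx incidence : 'M[R]_(nj, 3) -> 'M[R]_(nb, 3)).

(* degree of statical indeterminacy: dimension of the space of admissible
   internal force states in equilibrium under zero external load
   (self-stresses) *)
Definition static_indet : nat := \rank (admissible :&: kermx equil_map)%MS.

(* degree of statical overdeterminacy: codimension, in the space of external
   loads (one force per free body), of the loads that can be equilibrated *)
Definition static_overdet : nat := (nb * 3 - \rank (admissible *m equil_map))%N.

(* kinematics: velocities E : 'M_(nb,3) (row k = e_k, ground at rest);
   compatibility: the relative velocity at each joint does no work against
   any admissible joint force *)
Definition compat_map (E : 'M[R]_(nb, 3)) : 'M[R]_(nj, 3) :=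
  \matrix_(j < nj) (row j (incidence^T *m E) *m (jforces s j)^T).

Definition kin_indet : nat := \rank (kermx (lin_mx compat_map)).

End Degrees.

(* Image of the statics problem under the invertible linear map A of force
   coordinates (projective transformation F_p->F_p, F_c->F_c, or duality
   F_p<->F_c) composed with the congruence rescaling the force of joint j
   by the nonzero factor psi j: f_j |-> psi j * f_j A. *)
Definition transform (R : fieldType) (nb nj : nat) (s : structure R nb nj)
  (A : 'M[R]_3) (psi : 'I_nj -> R) : structure R nb nj :=
  Structure (jtail s) (jhead s) (fun j => (psi j *: jforces s j) *m A).

(* Main.v *)
Require Import Defs.
From HB Require Import structures.
From mathcomp Require Import all_boot all_order all_algebra.
Import Order.TTheory GRing.Theory Num.Theory.
Set Implicit Arguments. Unset Strict Implicit. Unset Printing Implicit Defensive.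
Local Open Scope ring_scope.

Definition embj (R : fieldType) (nj : nat) (B : 'M[R]_(nj, 1)) (x : 'rV[R]_3)
  : 'rV[R]_(nj * 3) := mxvec (B *m x).
Fact embj_is_semilinear (R : fieldType) (nj : nat) (B : 'M[R]_(nj, 1)) :
  semilinear (embj B).
Proof. by split=> [a A|A1 A2]; rewrite /embj ?mulmxDr ?scalemxAr ?linearD ?linearZ. Qed.
HB.instance Definition _ (R : fieldType) (nj : nat) (B : 'M[R]_(nj, 1)) :=
  GRing.isSemilinear.Build R 'rV[R]_3 'rV[R]_(nj * 3) _ (embj B)
    (embj_is_semilinear B).

Section Proofs.
Variable R : fieldType.

Lemma row_lin1 m n (g : 'rV[R]_m -> 'rV[R]_n) i :
  row i (lin1_mx g) = g (delta_mx 0 i).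
Proof. by apply/rowP => j; rewrite !mxE. Qed.

Lemma lin1_comp m n p (g : 'rV[R]_m -> 'rV[R]_n) (h : {linear 'rV[R]_n -> 'rV[R]_p}) :
  lin1_mx (h \o g) = lin1_mx g *m lin1_mx h.
Proof.
apply/row_matrixP => i; rewrite row_lin1 rowE mulmxA -rowE row_lin1.
by rewrite mul_rV_lin1.
Qed.

Lemma lin_inv_rank a b c (f g : {linear 'M[R]_(a, b) -> 'M[R]_(a, b)}) (X : 'M[R]_(c, a * b)) :
  (forall Y, g (f Y) = Y) -> \rank (X *m lin_mx f) = \rank X.
Proof.
move=> gf.
have U : lin_mx f *m lin_mx g = 1%:M.
  apply/row_matrixP => i; rewrite rowE mulmxA mul_rV_lin mx_rV_lin gf vec_mxK.
  by rewrite rowE mulmx1.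
apply/eqP; rewrite eqn_leq mxrankM_maxl /=.
by rewrite -{1}[X]mulmx1 -U mulmxA mxrankM_maxl.
Qed.

End Proofs.

Section CompatLin.
Variables (R : fieldType) (nb nj : nat) (s : structure R nb nj).
Fact compat_is_semilinear : semilinear (compat_map s).
Proof.
split=> [a E|E1 E2]; apply/row_matrixP => j; rewrite ?linearZ ?linearD /= !rowK.
  by rewrite !row_mul -scalemxAr -scalemxAl.
by rewrite !row_mul mulmxDr mulmxDl.
Qed.
HB.instance Definition _ :=
  GRing.isSemilinear.Build R 'M[R]_(nb, 3) 'M[R]_(nj, 3) _ (compat_map s)
    compat_is_semilinear.
End CompatLin.

Lemma lin_inv1 (R : fieldType) a b (f g : {linear 'M[R]_(a, b) -> 'M[R]_(a, b)}) :
  (forall Y, g (f Y) = Y) -> lin_mx f *m lin_mx g = 1%:M.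
Proof.
move=> gf; apply/row_matrixP => i; rewrite rowE mulmxA mul_rV_lin mx_rV_lin gf vec_mxK.
by rewrite rowE mulmx1.
Qed.

Lemma lin_inv_rank_l (R : fieldType) a b c (f g : {linear 'M[R]_(a, b) -> 'M[R]_(a, b)}) (X : 'M[R]_(a * b, c)) :
  (forall Y, f (g Y) = Y) -> \rank (lin_mx f *m X) = \rank X.
Proof.
move=> fg; have U := lin_inv1 fg.
apply/eqP; rewrite eqn_leq mxrankM_maxr /=.
by rewrite -{1}[X]mul1mx -U -mulmxA mxrankM_maxr.
Qed.

Theorem corollary1 (R : realFieldType) (nb nj : nat) (s : structure R nb nj)
    (A : 'M[R]_3) (psi : 'I_nj -> R) :
  A \in unitmx -> (forall j, psi j != 0) ->
  [/\ static_indet (transform s A psi) = static_indet s,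
      static_overdet (transform s A psi) = static_overdet s
    & kin_indet (transform s A psi) = kin_indet s].
Proof.
move=> Au psinz.
set s' := transform s A psi.
have AK : forall m (Y : 'M[R]_(m, 3)), mulmxr (invmx A) (mulmxr A Y) = Y.
  by move=> m Y /=; rewrite mulmxK.
set M := lin_mx (mulmxr A : 'M[R]_(nj, 3) -> 'M[R]_(nj, 3)).
set N := lin_mx (mulmxr A : 'M[R]_(nb, 3) -> 'M[R]_(nb, 3)).
have rM : forall c (X : 'M[R]_(c, nj * 3)), \rank (X *m M) = \rank X.
  by move=> c X; apply: (lin_inv_rank _ (AK nj)).
have rN : forall c (X : 'M[R]_(c, nb * 3)), \rank (X *m N) = \rank X.
  by move=> c X; apply: (lin_inv_rank _ (AK nb)).
have Eeq : equil_map s' = equil_map s by [].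
set E := equil_map s.
have ME : M *m E = E *m N.
  apply/row_matrixP => i; rewrite !rowE !mulmxA !mul_rV_lin /=.
  by rewrite !mxvecK mulmxA.
have AL : forall B : 'M[R]_(nj, 1), A *m lin1_mx (embj B) = lin1_mx (embj B) *m M.
  move=> B; apply/row_matrixP => i; rewrite !rowE !mulmxA !mul_rV_lin1 /embj.
  by rewrite /= /embj mxvecK mulmxA.
have jsE : forall j, joint_space s' j = psi j *: (joint_space s j *m M).
  move=> j; rewrite /joint_space /=.
  change (fun x : 'rV[R]_3 => mxvec (delta_mx j 0 *m x : 'M[R]_(nj, 3)))
    with (embj (delta_mx j 0 : 'M[R]_(nj, 1))).
  by rewrite -!scalemxAl -!mulmxA AL.
have admE : (admissible s' :=: admissible s *m M)%MS.
  apply: eqmx_sym; apply: eqmx_trans (sumsmxMr_gen _ _ _) _.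
  apply: eqmx_sums => j _; apply/eqmxP; rewrite !genmxE jsE.
  apply/eqmxP; apply: eqmx_trans (eqmx_sym (eqmx_scale _ (psinz j))).
  by apply: eqmxMr; apply: genmxE.
split.
- set K := kermx E.
  have KM : (K *m M :=: K)%MS.
    have sub : (K *m M <= K)%MS by rewrite sub_kermx -mulmxA ME mulmxA mulmx_ker mul0mx.
    by apply/eqmxP; rewrite -(mxrank_leqif_eq sub).2 rM.
  rewrite /static_indet Eeq -/E -/K.
  have h1 := mxrank_sum_cap (admissible s') K.
  have h0 := mxrank_sum_cap (admissible s) K.
  have e1 : \rank (admissible s' + K)%MS = \rank (admissible s + K)%MS.
    by rewrite (adds_eqmx admE (eqmx_sym KM)) -(addsmxMr (admissible s) K M) rM.
  have e2 : \rank (admissible s') = \rank (admissible s) by rewrite admE rM.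
  rewrite e1 e2 in h1.
  by apply/eqP; rewrite -(eqn_add2l (\rank (admissible s + K)%MS)) h0 h1.
- by rewrite /static_overdet Eeq (eqmxMr E admE) -/E -mulmxA ME mulmxA rN.
- set D := diag_mx (\row_j psi j) : 'M[R]_nj.
  set D' := diag_mx (\row_j (psi j)^-1) : 'M[R]_nj.
  have ceq : forall Em : 'M[R]_(nb, 3), compat_map s' Em = D *m compat_map s (Em *m A^T).
    move=> Em; apply/row_matrixP => j; rewrite row_mul row_diag_mx -scalemxAl -rowE !rowK /=.
    rewrite mxE trmx_mul linearZ /= -!scalemxAr.
    by rewrite !mulmxA !row_mul.
  set LA := lin_mx (mulmxr A^T : 'M[R]_(nb, 3) -> 'M[R]_(nb, 3)).
  set LD := lin_mx (mulmx D : 'M[R]_(nj, 3) -> 'M[R]_(nj, 3)).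
  have linE : lin_mx (compat_map s') = LA *m lin_mx (compat_map s) *m LD.
    apply/row_matrixP => i; rewrite !rowE !mulmxA !mul_rV_lin /= !mxvecK.
    by rewrite ceq.
  rewrite /kin_indet linE !mxrank_ker.
  have gD : forall Z : 'M[R]_(nj, 3), mulmx D' (mulmx D Z) = Z.
    by move=> Z; rewrite !mul_diag_mx; apply/matrixP => i k; rewrite !mxE mulrA mulVf // mul1r.
  have gA : forall Z : 'M[R]_(nb, 3), mulmxr A^T (mulmxr (invmx A)^T Z) = Z.
    by move=> Z /=; rewrite -mulmxA -trmx_mul mulmxV // trmx1 mulmx1.
  by rewrite (lin_inv_rank _ gD) (lin_inv_rank_l _ gA).
Qed.
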